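(* Let $P$ be a program and $M$ a memory model, and assume every execution graph $G$ with $\mathrm{cons}_M^P(G)$ satisfies $\mathit{BE}(G)$. Then there exists $b\in\mathbb N$ such that for every execution graph $G$ with $\mathrm{cons}_M^P(G)$, $\bigl|\{(T,t)\mid T\in\mathcal T,\ t<N_G^T,\ e_G^T(t)\text{ is a write event}\}\bigr|\le b.$
   Context: Programs. There are finite sets $\mathit{Register}$, $\mathit{Value}$, $\mathit{Location}$; $\mathit{State}=\mathit{Register}\to\mathit{Value}$; an update is a partial map $\mathit{Register}\rightharpoonup\mathit{Value}$, and $(\sigma\ll\mu)(r)=\mu(r)$ if $r\in\mathrm{Dom}(\mu)$, else $\sigma(r)$. Events are reads $R^m(x)$, writes $W^m(x,v)$, fences $F^m$, error $E$. A program $P$ consists of a finite set $\mathcal T$ of threads, each $T$ with a finite statement sequence $P_T(0),\dots,P_T(|P_T|-1)$. A statement is $\mathtt{step}(\epsilon,\delta)$ with $\epsilon:\mathit{State}\to\mathit{Event}$, $\delta:\mathit{State}\times(\mathit{Value}\cup\{\bot\})\to\mathit{Update}$, or $\mathtt{await}(n,\kappa)$ with $n\in\mathbb N$, $\kappa:\mathit{State}\to\{0,1\}$. Syntactic restriction: if $P_T(k)=\mathtt{await}(n,\cdot)$ then $n\le k$ and no $P_T(k')$ with $k'\in[k-n:k)$ is an await. ($[a:b)=\{a,\dots,b-1\}$.) An execution graph $G$ has a set $G.\mathrm E$ of triples $\langle T,t,e\rangle$, a partial reads-from map $G.\mathrm{rf}$ from reads to writes, and a modification order $G.\mathrm{mo}$.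 Thread-local semantics: $k_G^T(0)=0$, $\sigma_G^T(0)$ fixed; if $k_G^T(t)\ge|P_T|$ or no triple $\langle T,t,\cdot\rangle$ is in $G.\mathrm E$, execution stops ($N_G^T=t$). Otherwise with $S=P_T(k_G^T(t))$: $e_G^T(t)=\epsilon(\sigma_G^T(t))$ for $S=\mathtt{step}(\epsilon,\cdot)$, $F^{\mathrm{rlx}}$ for an await; $v_G^T(t)$ is the value of the write that $G.\mathrm{rf}$ assigns to $\langle T,t,e_G^T(t)\rangle$ if this is a read with defined rf, else $\bot$. For a step: $k_G^T(t+1)=k_G^T(t)+1$; if $e_G^T(t)$ is a read with $v_G^T(t)=\bot$ then $N_G^T=t+1$, $\sigma_G^T(t+1)=\sigma_G^T(t)$, else $\sigma_G^T(t+1)=\sigma_G^T(t)\ll\delta(\sigma_G^T(t),v_G^T(t))$. For $\mathtt{await}(n,\kappa)$: $\sigma_G^T(t+1)=\sigma_G^T(t)$ and $k_G^T(t+1)=k_G^T(t)+1$ if $\kappa(\sigma_G^T(t))=0$, else $k_G^T(t)-n$. $\mathrm{cons}^P(G)$ holds iff $G.\mathrm E=\{\langle T,t,e_G^T(t)\rangle\mid T\in\mathcal T,\ t<N_G^T\}$; $\mathrm{cons}_M$ is an arbitrary fixed predicate on graphs and $\mathrm{cons}_M^P(G)=\mathrm{cons}^P(G)\wedge\mathrm{cons}_M(G)$. Awaits: $\mathit{end}_G^T(0)<\mathit{end}_G^T(1)<\cdots$ enumerate the steps $t$ at which $P_T(k_G^T(t))$ is an await; $\mathit{len}_G^T(q)=n$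 where $P_T(k_G^T(\mathit{end}_G^T(q)))=\mathtt{await}(n,\kappa)$; $\mathit{start}_G^T(q)=\mathit{end}_G^T(q)-\mathit{len}_G^T(q)$; $\mathit{fail}_G^T(q)$ iff $\kappa(\sigma_G^T(\mathit{end}_G^T(q)))=1$. Bounded effect. $\delta_G^T(t)=\delta(\sigma_G^T(t),v_G^T(t))$ if $P_T(k_G^T(t))=\mathtt{step}(\cdot,\delta)$ and not ($e_G^T(t)$ is a read and $v_G^T(t)=\bot$); otherwise the empty update. $\mathit{vis}_G^T(t,u)=\mathrm{Dom}(\delta_G^T(t))\setminus\bigcup_{t<u'<u}\mathrm{Dom}(\delta_G^T(u'))$. $F(\mathtt{step}(\epsilon,\delta))=\{\epsilon,\delta\}$, $F(\mathtt{await}(n,\kappa))=\{\kappa\}$. A function $f$ depends on $R\subseteq\mathit{Register}$ iff there are states $\sigma,\sigma'$ agreeing outside $R$ with $f(\sigma)\neq f(\sigma')$ (for $f=\delta$: $\delta(\sigma,v)\neq\delta(\sigma',v)$ for some $v$). Step $t$ of $T$ register-reads-from to step $u$ ($t\to_{\mathrm{rrf}}u$) iff $u\ge t$ and some $f\in F(P_T(k_G^T(u)))$ depends on $\mathit{vis}_G^T(t,u)$. $\mathit{BE}(G)$ holds iff for all $T$, all $q$ with $\mathit{fail}_G^T(q)$ and all $t\in[\mathit{start}_G^T(q):\mathit{end}_G^T(q))$: $e_G^T(t)$ is not a write, and $t\to_{\mathrm{rrf}}u$ implies $u\in[\mathit{start}_G^T(q):\mathit{end}_G^T(q))$. *)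

(* Defs.v *)
From mathcomp Require Import all_boot.
Set Implicit Arguments.
Unset Strict Implicit.
Unset Printing Implicit Defensive.

(* Access modes (C11-style); only [Mrlx] is referenced by the semantics. *)
Inductive Mode := Mna | Mrlx | Macq | Mrel | Macqrel | Msc.

Section Semantics.
Variables (Reg Val Loc Thread : finType).

Inductive Event :=
  | ERead  (m : Mode) (x : Loc)
  | EWrite (m : Mode) (x : Loc) (v : Val)
  | EFence (m : Mode)
  | EError.

Definition is_read (e : Event) : bool := if e is ERead _ _ then true else false.
Definition is_write (e : Event) : bool := if e is EWrite _ _ _ then true else false.
Definition write_val (e : Event) : option Val :=
  if e is EWrite _ _ v then Some v else None.

Definition State := Reg -> Val.
Definition Update := Reg -> option Val.
Definition empty_update : Update := fun _ => None.
Definition upd (s : State) (mu : Update) : State :=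
  fun r => if mu r is Some v then v else s r.

(* option Val = Value ∪ {⊥}, with None = ⊥ *)
Inductive Stmt :=
  | Step (eps : State -> Event) (delta : State -> option Val -> Update)
  | Await (n : nat) (kappa : State -> bool).

Record program := Program {
  prog : Thread -> seq Stmt;
  init : Thread -> State
}.

Definition stmt_at (P : program) (T : Thread) (k : nat) : option Stmt :=
  nth None (map Some (prog P T)) k.

Definition is_await (S : option Stmt) : bool :=
  if S is Some (Await _ _) then true else false.

Definition wf_program (P : program) : Prop :=
  forall T k n kappa, stmt_at P T k = Some (Await n kappa) ->
    n <= k /\ (forall k', k - n <= k' < k -> ~~ is_await (stmt_at P T k')).

Definition Triple := (Thread * nat * Event)%type.

Record graph := Graph {
  gE  : Thread -> nat -> Event -> Prop;
  grf : Triple -> option Triple;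
  gmo : Triple -> Triple -> Prop
}.

Definition wf_graph (G : graph) : Prop :=
  forall a b : Triple, grf G a = Some b ->
    gE G a.1.1 a.1.2 a.2 /\ gE G b.1.1 b.1.2 b.2 /\ is_read a.2 /\ is_write b.2.

Variables (P : program) (G : graph).

Definition val_of (T : Thread) (t : nat) (e : Event) : option Val :=
  if is_read e then
    (if grf G (T, t, e) is Some w then write_val w.2 else None)
  else None.

Definition ev_of (T : Thread) (k : nat) (s : State) : Event :=
  match stmt_at P T k with
  | Some (Step eps _) => eps s
  | Some (Await _ _) => EFence Mrlx
  | None => EError
  end.

(* (k_G^T(t), sigma_G^T(t)), computed for all t (only meaningful for t < N_G^T) *)
Fixpoint cfg (T : Thread) (t : nat) : nat * State :=
  match t with
  | 0 => (0, init P T)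
  | t'.+1 =>
    let (k, s) := cfg T t' in
    match stmt_at P T k with
    | Some (Step eps delta) =>
        let e := eps s in
        let v := val_of T t' e in
        (k.+1, if is_read e && (v == None) then s else upd s (delta s v))
    | Some (Await n kappa) => (if kappa s then k - n else k.+1, s)
    | None => (k, s)
    end
  end.

Definition kk (T : Thread) (t : nat) : nat := (cfg T t).1.
Definition sigma (T : Thread) (t : nat) : State := (cfg T t).2.
Definition ev (T : Thread) (t : nat) : Event := ev_of T (kk T t) (sigma T t).
Definition vv (T : Thread) (t : nat) : option Val := val_of T t (ev T t).

(* execution of T stops at step u (i.e. N_G^T <= u) *)
Definition stops (T : Thread) (u : nat) : Prop :=
  size (prog P T) <= kk T u
  \/ ~ (exists e, gE G T u e)
  \/ (exists s, u = s.+1 /\ is_read (ev T s) /\ vv T s = None).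

(* t < N_G^T *)
Definition active (T : Thread) (t : nat) : Prop :=
  forall u, u <= t -> ~ stops T u.

Definition consP : Prop :=
  forall T t e, gE G T t e <-> (active T t /\ e = ev T t).

Definition delta_at (T : Thread) (t : nat) : Update :=
  match stmt_at P T (kk T t) with
  | Some (Step _ delta) =>
      if is_read (ev T t) && (vv T t == None) then empty_update
      else delta (sigma T t) (vv T t)
  | _ => empty_update
  end.

Definition vis (T : Thread) (t u : nat) (r : Reg) : Prop :=
  delta_at T t r <> None /\
  (forall u', t < u' < u -> delta_at T u' r = None).

Definition agree_outside (R : Reg -> Prop) (s s' : State) : Prop :=
  forall r, ~ R r -> s r = s' r.

Definition depends_st {A : Type} (f : State -> A) (R : Reg -> Prop) : Prop :=
  exists s s', agree_outside R s s' /\ f s <> f s'.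

Definition depends_delta (delta : State -> option Val -> Update)
    (R : Reg -> Prop) : Prop :=
  exists s s' v, agree_outside R s s' /\ exists r, delta s v r <> delta s' v r.

Definition depends_stmt (St : Stmt) (R : Reg -> Prop) : Prop :=
  match St with
  | Step eps delta => depends_st eps R \/ depends_delta delta R
  | Await _ kappa => depends_st kappa R
  end.

Definition rrf (T : Thread) (t u : nat) : Prop :=
  t <= u /\
  (if stmt_at P T (kk T u) is Some St then depends_stmt St (vis T t u) else False).

(* BE(G): quantifying over the await steps end = end_G^T(q) directly *)
Definition BE : Prop :=
  forall T (tend n : nat) (kappa : State -> bool),
    active T tend ->
    stmt_at P T (kk T tend) = Some (Await n kappa) ->
    kappa (sigma T tend) ->
    forall t, tend - n <= t < tend ->
      ~~ is_write (ev T t) /\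
      (forall u, active T u -> rrf T t u -> tend - n <= u < tend).

End Semantics.

Definition consMP (Reg Val Loc Thread : finType)
    (P : program Reg Val Loc Thread) (consM : graph Val Loc Thread -> Prop)
    (G : graph Val Loc Thread) : Prop :=
  consP P G /\ consM G.

(* Main.v *)
Require Import Defs.
From mathcomp Require Import all_boot.
From mathcomp Require Import zify.

Lemma kkS (Reg Val Loc Thread : finType) (P : program Reg Val Loc Thread) G T t :
  kk P G T t.+1 = match stmt_at P T (kk P G T t) with
                  | Some (Step _ _) => (kk P G T t).+1
                  | Some (Await n kappa) => if kappa (sigma P G T t) then kk P G T t - n else (kk P G T t).+1
                  | None => kk P G T t end.
Proof.
rewrite /kk /sigma /=; case: (cfg P G T t) => k s /=.
by case: (stmt_at P T k) => [[eps d|n kp]|] //=; case: (kp s).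
Qed.

Lemma stmt_at_ge (Reg Val Loc Thread : finType) (P : program Reg Val Loc Thread) T k :
  size (prog P T) <= k -> stmt_at P T k = None.
Proof. by move=> h; rewrite /stmt_at nth_default // size_map. Qed.

Lemma stmt_at_lt (Reg Val Loc Thread : finType) (P : program Reg Val Loc Thread) T k St :
  stmt_at P T k = Some St -> k < size (prog P T).
Proof. by case: ltnP => // h; rewrite stmt_at_ge. Qed.

Lemma inv_ge (Reg Val Loc Thread : finType) (P : program Reg Val Loc Thread) G T a n kp t :
  wf_program P -> stmt_at P T a = Some (Await _ n kp) ->
  a - n <= kk P G T t -> a - n <= kk P G T t.+1.
Proof.
move=> wf Ha h; rewrite kkS.
case E: (stmt_at P T (kk P G T t)) => [[eps d|n2 k2]|] //.
- by apply: leqW.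
- case: (k2 _) => //; last by apply: leqW.
  set k := kk P G T t in h E *.
  case: (ltngtP k a) => hk.
  + have [_ /(_ k)] := wf T a n kp Ha.
    by rewrite h hk E => /(_ isT).
  + have [hn2 /(_ a)] := wf T k n2 k2 E.
    rewrite Ha hk /=.
    case: (leqP (k - n2) a) => hh //; last by move=> _; lia.
    by move=> /(_ isT).
  + subst k; rewrite hk Ha in E; case: E => -> _; by rewrite -hk.
Qed.

Lemma no_repeat (Reg Val Loc Thread : finType) (P : program Reg Val Loc Thread) G T t1 d :
  wf_program P -> BE P G ->
  is_write (ev P G T t1) -> active P G T (t1 + d.+1) ->
  kk P G T (t1 + d.+1) = kk P G T t1 -> False.
Proof.
move=> wf HBE Hw Hact Hrep.
set k' := kk P G T t1 in Hrep.
have [eps0 [dl0 Hst]] : exists eps dl, stmt_at P T k' = Some (Step eps dl).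
  move: Hw; rewrite /ev /ev_of -/k'.
  by case: (stmt_at P T k') => [[eps dl|n kp]|] // _; exists eps, dl.
have Q : forall d, kk P G T (t1 + d) = k' + d \/
   (exists tend n kp, t1 <= tend < t1 + d /\
      stmt_at P T (kk P G T tend) = Some (Await _ n kp) /\ kp (sigma P G T tend) /\ tend - n <= t1) \/
   (exists a n kp, stmt_at P T a = Some (Await _ n kp) /\ k' < a - n /\ a - n <= kk P G T (t1 + d)) \/
   size (prog P T) <= kk P G T (t1 + d).
  elim => [|d0 IH]; first by left; rewrite !addn0.
  rewrite !addnS.
  case: IH => [h1|[[te [n [kp [h21 [h22 [h23 h24]]]]]]|[[a [n [kp [h31 [h32 h33]]]]]|h4]]].
  - rewrite kkS h1.
    case E: (stmt_at P T (k' + d0)) => [[eps dl|n kp]|].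
    + by left.
    + case K: (kp _).
      * case: (leqP (t1 + d0 - n) t1) => hh.
        -- right; left; exists (t1 + d0), n, kp; rewrite h1 E; split; first lia.
           by rewrite K.
        -- right; right; left; exists (k' + d0), n, kp; split => //; split => //; lia.
      * by left.
    + right; right; right; case: ltnP => // hh.
      by rewrite /stmt_at (nth_map (Await Loc 0 (fun _ => true))) in E.
  - right; left; exists te, n, kp; split => //; lia.
  - right; right; left; exists a, n, kp; split => //; split => //.
    exact: inv_ge h31 h33.
  - right; right; right; rewrite kkS stmt_at_ge //.
case: (Q d.+1) => [h1|[[te [n [kp [h21 [h22 [h23 h24]]]]]]|[[a [n [kp [h31 [h32 h33]]]]]|h4]]].
- move: h1; rewrite Hrep; lia.
- have hte : t1 < te.
    rewrite ltn_neqAle; case/andP: h21 => -> _; rewrite andbT.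
    apply/eqP => e; subst te; by rewrite -/k' Hst in h22.
  have acte : active P G T te.
    move=> u hu; apply: Hact; case/andP: h21 => _ h; lia.
  have [hw _] := HBE T te n kp acte h22 h23 t1 ltac:(lia).
  by rewrite Hw in hw.
- move: h33; rewrite Hrep; lia.
- move: h4; rewrite Hrep => h4.
  by rewrite stmt_at_ge in Hst.
Qed.

Theorem lemma9 (Reg Val Loc Thread : finType)
    (P : program Reg Val Loc Thread)
    (consM : graph Val Loc Thread -> Prop) :
  wf_program P ->
  (forall G : graph Val Loc Thread,
      wf_graph G -> consMP P consM G -> BE P G) ->
  exists b : nat,
    forall G : graph Val Loc Thread,
      wf_graph G -> consMP P consM G ->
      forall s : seq (Thread * nat),
        uniq s ->
        (forall p, p \in s -> active P G p.1 p.2 /\ is_write (ev P G p.1 p.2)) ->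
        size s <= b.
Proof.
move=> wf HBEall.
set m := \max_(T : Thread) size (prog P T).
set L := [seq (T, k) | T <- enum Thread, k <- iota 0 m].
exists (size L) => G wfG cons s us Hs.
have HBE := HBEall G wfG cons.
set f := fun p : Thread * nat => (p.1, kk P G p.1 p.2).
rewrite -(size_map f).
apply: uniq_leq_size.
- rewrite map_inj_in_uniq // => [[T1 t1] [T2 t2]] h1 h2 [eT ek].
  subst T2.
  have [a1 w1] := Hs _ h1; have [a2 w2] := Hs _ h2.
  simpl in *.
  case: (ltngtP t1 t2) => ht; last by rewrite ht.
  + exfalso; have e : t2 = t1 + (t2 - t1).-1.+1 by lia.
    rewrite e in a2 ek.
    exact: (@no_repeat _ _ _ _ P G T1 t1 _ wf HBE w1 a2 (esym ek)).
  + exfalso; have e : t1 = t2 + (t1 - t2).-1.+1 by lia.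
    rewrite e in a1 ek.
    exact: (@no_repeat _ _ _ _ P G T1 t2 _ wf HBE w2 a1 ek).
- move=> x /mapP [[T t] hp ->].
  have [_ w] := Hs _ hp.
  simpl in w.
  have [eps [dl Hst]] : exists eps dl, stmt_at P T (kk P G T t) = Some (Step eps dl).
    move: w; rewrite /ev /ev_of.
    by case: (stmt_at P T _) => [[eps dl|n kp]|] // _; exists eps, dl.
  have hlt := @stmt_at_lt _ _ _ _ P T _ _ Hst.
  rewrite /f /L /=.
  apply: (allpairs_f (fun T k => (T, k))); first by rewrite mem_enum.
  rewrite mem_iota /= add0n.
  apply: (leq_trans hlt); exact: (leq_bigmax_cond T).
Qed.
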